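(* There exists a set $\mathfrak T$ of green graph rewriting rules which does not lead to the red spider, but finitely leads to the red spider.
   Context: Fix a positive integer $s$ and let $\mathbb S=\{1,\dots,s\}$ and $\bar{\mathbb S}=\mathbb S\cup\{\emptyset\}$ (elements of $\mathbb S$ are natural numbers, called labels). A green graph is a (finite or infinite) relational structure over the signature consisting of binary relations $H_i$, $i\in\bar{\mathbb S}$; an atom $H_i(x,y)$ is called an edge from $x$ to $y$ labelled $i$. A green graph rewriting rule is a first-order sentence of one of the following two kinds, where $I_1,I_2,I_3,I_4\in\bar{\mathbb S}\setminus\{3,4\}$, $I_1\neq I_3$ and $I_2\neq I_4$: (end-sharing rule) $[I_1,I_2\leftrightarrow I_3,I_4]_{\mathrm{end}}$ denotes $\forall x,x'\,\big[(\exists y\,H_{I_1}(x,y)\wedge H_{I_2}(x',y))\Leftrightarrow(\exists y\,H_{I_3}(x,y)\wedge H_{I_4}(x',y))\big]$; (start-sharing rule) $[I_1,I_2\leftrightarrow I_3,I_4]_{\mathrm{start}}$ denotes $\forall y,y'\,\big[(\exists x\,H_{I_1}(x,y)\wedge H_{I_2}(x,y'))\Leftrightarrow(\exists x\,H_{I_3}(x,y)\wedge H_{I_4}(x,y'))\big]$. A green graph contains a 1-2 pattern if it has edges $H_1(a,b)$ and $H_2(a',b)$ for some vertices $a,a',b$. A set $\mathcal T$ of green graph rewriting rules leads to the red spider (resp. finitely leads to the red spider) if every green graph (resp. every finite green graph) $\mathbb D$ with $\mathbb D\models\mathcal T$ which contains at least one edge labelled $\emptyset$ also contains a 1-2 pattern.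 *)

(* Defs.v *)
From Stdlib Require Import List Arith.

(* Labels: [None] is the label ∅, [Some i] is the natural-number label i.
   A label is valid for parameter s if it lies in S̄ = {1..s} ∪ {∅}. *)
Definition label := option nat.

Definition valid_label (s : nat) (l : label) : Prop :=
  match l with
  | None => True
  | Some i => 1 <= i /\ i <= s
  end.

(* We represent it as a family indexed by all of [label], required to be
   empty outside S̄ (so only the signature's relations carry edges). *)
Definition green_graph (s : nat) {V : Type} (H : label -> V -> V -> Prop) : Prop :=
  forall l x y, H l x y -> valid_label s l.

Definition finite_type (V : Type) : Prop := exists l : list V, forall x, In x l.

Inductive rule_kind := End_sharing | Start_sharing.

Record rule := mkRule {
  r_kind : rule_kind;
  r_I1 : label; r_I2 : label; r_I3 : label; r_I4 : label }.

Definition rule_label (s : nat) (l : label) : Prop :=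
  valid_label s l /\ l <> Some 3 /\ l <> Some 4.

Definition wf_rule (s : nat) (r : rule) : Prop :=
  rule_label s (r_I1 r) /\ rule_label s (r_I2 r) /\
  rule_label s (r_I3 r) /\ rule_label s (r_I4 r) /\
  r_I1 r <> r_I3 r /\ r_I2 r <> r_I4 r.

Definition satisfies {V : Type} (H : label -> V -> V -> Prop) (r : rule) : Prop :=
  match r_kind r with
  | End_sharing =>
      forall x x' : V,
        (exists y, H (r_I1 r) x y /\ H (r_I2 r) x' y) <->
        (exists y, H (r_I3 r) x y /\ H (r_I4 r) x' y)
  | Start_sharing =>
      forall y y' : V,
        (exists x, H (r_I1 r) x y /\ H (r_I2 r) x y') <->
        (exists x, H (r_I3 r) x y /\ H (r_I4 r) x y')
  end.

Definition models {V : Type} (H : label -> V -> V -> Prop) (T : rule -> Prop) : Prop :=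
  forall r, T r -> satisfies H r.

Definition has_12_pattern {V : Type} (H : label -> V -> V -> Prop) : Prop :=
  exists a a' b, H (Some 1) a b /\ H (Some 2) a' b.

Definition has_empty_edge {V : Type} (H : label -> V -> V -> Prop) : Prop :=
  exists x y, H None x y.

Definition leads_to_red_spider (s : nat) (T : rule -> Prop) : Prop :=
  forall (V : Type) (H : label -> V -> V -> Prop),
    green_graph s H -> models H T -> has_empty_edge H -> has_12_pattern H.

Definition finitely_leads_to_red_spider (s : nat) (T : rule -> Prop) : Prop :=
  forall (V : Type) (H : label -> V -> V -> Prop),
    finite_type V ->
    green_graph s H -> models H T -> has_empty_edge H -> has_12_pattern H.

(* Main.v *)
Require Import Defs.
From Stdlib Require Import List Arith Lia Relations IndefiniteDescription Classical.
Set Implicit Arguments.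

Lemma pigeon (V : Type) (l : list V) (Hl : forall x, In x l) (f : nat -> V) :
  exists i j, i < j /\ f i = f j.
Proof.
  apply NNPP; intro Hn.
  assert (Hinj : forall i j, f i = f j -> i = j).
  { intros i j E. destruct (Nat.lt_total i j) as [h|[h|h]]; auto;
    exfalso; apply Hn; eauto. }
  assert (ND : NoDup (map f (seq 0 (S (length l))))).
  { apply NoDup_map_NoDup_ForallPairs. intros a b _ _; apply Hinj. apply seq_NoDup. }
  assert (Hi : incl (map f (seq 0 (S (length l)))) l) by (intros x _; apply Hl).
  pose proof (NoDup_incl_length ND Hi) as L.
  rewrite length_map, length_seq in L. lia.
Qed.

Section Fin.
Variable V : Type.
Variable H : label -> V -> V -> Prop.
Hypothesis R1 : forall x x', (exists y, H (Some 1) x y /\ H (Some 2) x' y) <-> (exists y, H (Some 8) x y /\ H (Some 6) x' y).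
Hypothesis R2 : forall x x', (exists y, H (Some 5) x y /\ H (Some 5) x' y) <-> (exists y, H (Some 6) x y /\ H (Some 6) x' y).
Hypothesis R3 : forall x x', (exists y, H (Some 5) x y /\ H (Some 7) x' y) <-> (exists y, H (Some 7) x y /\ H (Some 5) x' y).
Hypothesis R4 : forall y y', (exists x, H (Some 7) x y /\ H (Some 5) x y') <-> (exists x, H (Some 6) x y /\ H (Some 6) x y').
Hypothesis R5 : forall x x', (exists y, H None x y /\ H None x' y) <-> (exists y, H (Some 5) x y /\ H (Some 8) x' y).

Definition S66 y y' := exists x, H (Some 6) x y /\ H (Some 6) x y'.
Definition E55 x x' := exists y, H (Some 5) x y /\ H (Some 5) x' y.
Definition EqB := clos_refl_trans V S66.
Definition EqA := clos_refl_trans V E55.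
Definition rng6 y := exists x, H (Some 6) x y.

Lemma S66_sym y y' : S66 y y' -> S66 y' y.
Proof. intros [x [a b]]; exists x; auto. Qed.

Lemma EqB_sym y y' : EqB y y' -> EqB y' y.
Proof.
  induction 1. apply rt_step, S66_sym; auto. apply rt_refl. eapply rt_trans; eauto.
Qed.

Lemma EqA_sym y y' : EqA y y' -> EqA y' y.
Proof.
  induction 1. apply rt_step. destruct H0 as [z [a b]]; exists z; auto. apply rt_refl. eapply rt_trans; eauto.
Qed.

Lemma rng6_EqB w c : EqB w c -> rng6 c -> rng6 w.
Proof.
  induction 1; auto. intros _. destruct H0 as [x1 [a _]]; exists x1; auto.
Qed.

Lemma dom7 z w : H (Some 5) z w -> rng6 w -> exists d, H (Some 7) z d.
Proof.
  intros H5 [x0 H6].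
  destruct (proj2 (R4 w w) (ex_intro _ x0 (conj H6 H6))) as [a [A7 A5]].
  destruct (proj1 (R3 z a) (ex_intro _ w (conj H5 A7))) as [y' [B7 _]].
  eauto.
Qed.

Lemma goodify z d b : H (Some 7) z d -> H (Some 5) z b -> S66 d b.
Proof. intros a c. apply (proj1 (R4 d b)). eauto. Qed.

Definition Good c z := forall b, H (Some 5) z b -> EqB b c.

Lemma good_init c y : H (Some 5) c y -> rng6 y -> Good y c.
Proof.
  intros H5 R. destruct (dom7 H5 R) as [d D].
  intros b Hb. eapply rt_trans. apply rt_step, S66_sym, (goodify D Hb).
  apply rt_step, (goodify D H5).
Qed.

Lemma good_step c z z' : rng6 c -> E55 z z' -> Good c z -> Good c z'.
Proof.
  intros Rc [w [A B]] G b Hb.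
  assert (Ew : EqB w c) by (apply G; auto).
  assert (Rw : rng6 w) by (eapply rng6_EqB; eauto).
  destruct (dom7 B Rw) as [d D].
  eapply rt_trans. apply rt_step, S66_sym, (goodify D Hb).
  eapply rt_trans. apply rt_step, (goodify D B). exact Ew.
Qed.

Lemma good_EqA c z z' : rng6 c -> EqA z z' -> (Good c z <-> Good c z').
Proof.
  intros Rc. induction 1.
  - split; apply good_step; auto. destruct H0 as [y1 [a b]]; exists y1; auto.
  - tauto.
  - tauto.
Qed.

Lemma back6 b b' : EqB b b' -> forall a a', H (Some 6) a b -> H (Some 6) a' b' -> EqA a a'.
Proof.
  intro E. apply clos_rt_rt1n in E. induction E; intros a a' A A'.
  - apply rt_step, (proj2 (R2 a a')). eauto.
  - destruct H0 as [s [S1 S2]].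
    eapply rt_trans. apply rt_step, (proj2 (R2 a s)). eauto.
    eapply IHE; eauto.
Qed.

Definition Step x x' := exists y, H (Some 6) x y /\ H (Some 5) x' y.

Lemma back_step a c a' c' : Step a c -> Step a' c' -> EqA c c' -> EqA a a'.
Proof.
  intros [y [A6 C5]] [y' [A6' C5']] E.
  assert (Ry : rng6 y) by (exists a; auto).
  assert (G : Good y c) by (apply good_init; auto).
  apply (good_EqA Ry E) in G.
  apply (back6 (EqB_sym (G _ C5'))); auto.
Qed.

Definition P x := exists y, H (Some 5) x y.

Lemma walk x : P x -> exists x', Step x x' /\ P x'.
Proof.
  intros [y Y].
  destruct (proj1 (R2 x x) (ex_intro _ y (conj Y Y))) as [z [Z _]].
  destruct (proj2 (R4 z z) (ex_intro _ x (conj Z Z))) as [x' [_ X5]].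
  exists x'. split. exists z; auto. exists z; auto.
Qed.

Lemma finite_case : finite_type V -> has_empty_edge H -> has_12_pattern H.
Proof.
  intros [l Hl] [u [v Huv]].
  destruct (proj1 (R5 u u) (ex_intro _ v (conj Huv Huv))) as [y0 [U5 U8]].
  assert (Pu : P u) by (exists y0; auto).
  pose (g := fun s : {x | P x} =>
    let (x, px) := s in
    let (x', q) := constructive_indefinite_description _ (walk px) in
    exist P x' (proj2 q)).
  assert (gstep : forall s, Step (proj1_sig s) (proj1_sig (g s))).
  { intros [x px]. simpl. destruct (constructive_indefinite_description _ (walk px)) as [x' q].
    simpl. apply q. }
  pose (f := fun n => proj1_sig (Nat.iter n g (exist P u Pu))).
  assert (fs : forall k, Step (f k) (f (S k))).
  { intro k. unfold f. simpl. apply gstep. }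
  assert (back : forall i j, i < j -> EqA (f i) (f j) -> EqA (f 0) (f (j - i))).
  { induction i; intros j Hij E.
    - rewrite Nat.sub_0_r; auto.
    - destruct j as [|j]; [lia|]. simpl.
      apply IHi; [lia|]. eapply back_step; eauto. }
  destruct (pigeon _ Hl f) as [i [j [Hij Eq]]].
  pose proof (back i j Hij) as B. rewrite Eq in B. specialize (B (rt_refl _ _ _)).
  remember (j - i) as m. destruct m as [|m]; [lia|].
  destruct (fs m) as [ym [Y6 Y5]].
  assert (Rym : rng6 ym) by (exists (f m); auto).
  assert (G : Good ym (f (S m))) by (apply good_init; auto).
  apply (good_EqA Rym (EqA_sym B)) in G.
  assert (Fu : f 0 = u) by reflexivity. rewrite Fu in G.
  pose proof (G _ U5) as Ey.
  destruct (rng6_EqB Ey Rym) as [x' X6].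
  destruct (proj2 (R1 u x') (ex_intro _ y0 (conj U8 X6))) as [w [W1 W2]].
  exists u, x', w; auto.
Qed.
End Fin.

Definition r1 := mkRule End_sharing (Some 1) (Some 2) (Some 8) (Some 6).
Definition r2 := mkRule End_sharing (Some 5) (Some 5) (Some 6) (Some 6).
Definition r3 := mkRule End_sharing (Some 5) (Some 7) (Some 7) (Some 5).
Definition r4 := mkRule Start_sharing (Some 7) (Some 5) (Some 6) (Some 6).
Definition r5 := mkRule End_sharing None None (Some 5) (Some 8).
Definition TT (r : rule) : Prop := r = r1 \/ r = r2 \/ r = r3 \/ r = r4 \/ r = r5.

Inductive vtx := VA (n : nat) | VB (n : nat).

Definition HM (l : label) (x y : vtx) : Prop :=
  match l, x, y with
  | Some 5, VA n, VB m => m = n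
  | Some 6, VA n, VB m => m = S n
  | Some 7, VA n, VB m => m = n /\ 1 <= n
  | Some 8, VA n, VB m => n = 0 /\ m = 0
  | None, VA n, VB m => n = 0 /\ m = 0
  | _, _, _ => False
  end.

Ltac crush :=
  let y := fresh "y" in let A := fresh in let B := fresh in
  intros [y [A B]];
  repeat match goal with
  | v : vtx |- _ => destruct v
  end; simpl in *; try contradiction;
  repeat match goal with h : _ /\ _ |- _ => destruct h end; subst;
  try lia.

Lemma HM_models : models HM TT.
Proof.
  intros r [-> | [-> | [-> | [-> | -> ]]]]; simpl; intros x x'; split.
  all: crush.
  all: try first
    [ match goal with n : nat |- _ => exists (VB n); simpl; intuition lia end
    | match goal with n : nat |- _ => exists (VB (S n)); simpl; intuition lia end
    | match goal with n : nat |- _ => exists (VA n); simpl; intuition lia end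
    | match goal with n : nat |- _ => exists (VA (pred n)); simpl; destruct n; intuition lia end
    | match goal with n : nat |- _ => exists (VA (S n)); simpl; intuition lia end
    | exists (VB 0); simpl; intuition lia ].
Qed.

Theorem theorem4 :
  exists s : nat, 0 < s /\
    exists T : rule -> Prop,
      (forall r, T r -> wf_rule s r) /\
      ~ leads_to_red_spider s T /\
      finitely_leads_to_red_spider s T.
Proof.
  exists 8. split; [lia|]. exists TT. split; [|split].
  - intros r [-> | [-> | [-> | [-> | -> ]]]]; unfold wf_rule, rule_label; simpl;
      repeat split; try lia; try discriminate; simpl; auto.
  - intro L. 
    assert (G : green_graph 8 HM).
    { intros l x y. destruct l as [n|], x, y; simpl; try contradiction; auto;
      destruct n as [|[|[|[|[|[|[|[|[|n]]]]]]]]]; simpl; try contradiction; intros; lia. }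
    destruct (L vtx HM G HM_models (ex_intro _ (VA 0) (ex_intro _ (VB 0) (conj eq_refl eq_refl))))
      as [a [a' [b [h1 h2]]]].
    destruct a, b; simpl in h1; contradiction.
  - intros V H0 Fin G M E.
    eapply finite_case; eauto.
    + exact (M r1 (or_introl eq_refl)).
    + exact (M r2 (or_intror (or_introl eq_refl))).
    + exact (M r3 (or_intror (or_intror (or_introl eq_refl)))).
    + exact (M r4 (or_intror (or_intror (or_intror (or_introl eq_refl))))).
    + exact (M r5 (or_intror (or_intror (or_intror (or_intror eq_refl))))).
Qed.
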